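(* Let $\Gamma$ be a finite set equipped with a product probability measure on $2^\Gamma$. Let $\{B_{ij}\}$ be a finite family of increasing events indexed by pairs $(i,j)$, and set $B_i=\bigcup_j B_{ij}$. Write $(i,j)\sim(k,l)$ if $B_{ij}$ and $B_{kl}$ are not independent; by convention $(i,j)\sim(i,j)$. Let $I_{ij},I_i$ be the indicators of $B_{ij},B_i$. Set \[ X=\sum_i I_i,\qquad \mu=\sum_{i,j}\mathbb E I_{ij}, \] \[ \bar\Theta=\sum_{i,j}\sum_k\Pr\Big(B_{ij}\cap\bigcup_l\{B_{kl}:(k,l)\sim(i,j)\}\Big), \] \[ \bar\Delta=\sum\sum\{\mathbb E I_{ij}I_{kl}:(i,j)\sim(k,l)\}, \] \[ \gamma=\sum_i\sum_{\{j,k\}}\mathbb E I_{ij}I_{ik}, \] where the last inner sum is over unordered pairs $\{j,k\}$ with $j\ne k$. Assume $\mu>0$. Then for every $t\in[\gamma,\mu]$, \[ \Pr(X\le\mu-t)\le\exp\Big[-\frac{(t-\gamma)^2}{2\bar\Theta}\Big]\le\exp\Big[-\frac{(t-\gamma)^2}{2\bar\Delta}\Big]. \]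
   Context: An event $B\subseteq 2^\Gamma$ is increasing if $A\in B$ and $A\subseteq A'$ imply $A'\in B$. *)

(* Defs.v *)
From Stdlib Require Import Reals.
From mathcomp Require Import all_boot.
Set Implicit Arguments. Unset Strict Implicit. Unset Printing Implicit Defensive.

Local Open Scope R_scope.

Section Defs.
Variable G : finType.

Definition event := {set {set G}}.

(* Product probability measure on 2^Gamma: each x in Gamma is included
   independently with probability p x. Weight of an outcome A. *)
Definition weight (p : G -> R) (A : {set G}) : R :=
  \big[Rmult/1]_(x : G) (if x \in A then p x else 1 - p x).

Definition Pr (p : G -> R) (E : event) : R :=
  \big[Rplus/0]_(A : {set G} | A \in E) weight p A.

Definition increasing_event (E : event) : Prop :=
  forall A A' : {set G}, A \in E -> A \subset A' -> A' \in E.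

Definition independent (p : G -> R) (E F : event) : Prop :=
  Pr p (E :&: F) = Pr p E * Pr p F.

Definition dependentb (p : G -> R) (E F : event) : bool :=
  if Req_EM_T (Pr p (E :&: F)) (Pr p E * Pr p F) then false else true.

Variables (I J : finType) (p : G -> R) (B : I -> J -> event).

Definition rel_dep (i : I) (j : J) (k : I) (l : J) : bool :=
  ((i == k) && (j == l)) || dependentb p (B i j) (B k l).

Definition Bi (i : I) : event := \bigcup_(j : J) B i j.

Definition Xval (A : {set G}) : R := INR #|[set i : I | A \in Bi i]|.

Definition mu : R := \big[Rplus/0]_(i : I) \big[Rplus/0]_(j : J) Pr p (B i j).

Definition Theta_bar : R :=
  \big[Rplus/0]_(i : I) \big[Rplus/0]_(j : J) \big[Rplus/0]_(k : I)
    Pr p (B i j :&: \bigcup_(l : J | rel_dep i j k l) B k l).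

Definition Delta_bar : R :=
  \big[Rplus/0]_(i : I) \big[Rplus/0]_(j : J) \big[Rplus/0]_(k : I)
    \big[Rplus/0]_(l : J | rel_dep i j k l) Pr p (B i j :&: B k l).

(* sum over unordered pairs {j,k}, j <> k = half the sum over ordered pairs *)
Definition gamma : R :=
  \big[Rplus/0]_(i : I)
    (/ 2 * \big[Rplus/0]_(j : J) \big[Rplus/0]_(k : J | k != j)
       Pr p (B i j :&: B i k)).

Definition lower_tail (t : R) : event := [set A : {set G} | (if Rle_dec (Xval A) (mu - t) then true else false)].
End Defs.

(* Main.v *)
Require Import Defs.
From HB Require Import structures.
From Stdlib Require Import Reals Lra Classical.
From mathcomp Require Import all_boot.
Set Implicit Arguments. Unset Strict Implicit. Unset Printing Implicit Defensive.
Local Open Scope R_scope.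

HB.instance Definition _ := Monoid.isComLaw.Build R 0 Rplus (fun a b c => esym (Rplus_assoc a b c)) Rplus_comm Rplus_0_l.
HB.instance Definition _ := Monoid.isComLaw.Build R 1 Rmult (fun a b c => esym (Rmult_assoc a b c)) Rmult_comm Rmult_1_l.
HB.instance Definition _ := Monoid.isMulLaw.Build R 0 Rmult Rmult_0_l Rmult_0_r.
HB.instance Definition _ := Monoid.isAddLaw.Build R Rmult Rplus Rmult_plus_distr_r Rmult_plus_distr_l.


Section ES.
Variable G : finType.
Variable p : G -> R.
Hypothesis hp : forall x, 0 <= p x <= 1.

Fixpoint ES (s : seq G) (h : {set G} -> R) (w : {set G}) : R :=
  match s with
  | [::] => h w
  | x :: s' => p x * ES s' h (x |: w) + (1 - p x) * ES s' h (w :\ x)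
  end.

Definition fct (y : G) (T : {set G}) : R := if y \in T then p y else 1 - p y.

Definition cf (s : seq G) (w T : {set G}) : R :=
  if T :\: [set y in s] == w :\: [set y in s] then \big[Rmult/1]_(y <- s) fct y T else 0.

Lemma cf_step x s w T : x \notin s ->
  cf (x :: s) w T = p x * cf s (x |: w) T + (1 - p x) * cf s (w :\ x) T.
Proof.
move=> xs; rewrite /cf big_cons /fct.
have E : forall (U V : {set G}), (U == V) = [forall y, (y \in U) == (y \in V)].
  move=> U V; apply/eqP/forallP => [->|H] //; apply/setP => y; exact/eqP.
rewrite !E.
case xT: (x \in T).
- have -> : [forall y, (y \in T :\: [set y0 in s]) == (y \in (w :\ x) :\: [set y0 in s])] = false.
    apply/negbTE/negP => /forallP /(_ x); rewrite !inE eqxx xT (negbTE xs) /=; by [].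
  have -> : [forall y, (y \in T :\: [set y0 in x :: s]) == (y \in w :\: [set y0 in x :: s])] =
            [forall y, (y \in T :\: [set y0 in s]) == (y \in (x |: w) :\: [set y0 in s])].
    apply/forallP/forallP => H y; have := H y; rewrite !inE;
    case: (eqVneq y x) => [->|ne]; rewrite ?xT ?(negbTE xs) //=.
  by case: ifP => _; ring.
- have -> : [forall y, (y \in T :\: [set y0 in s]) == (y \in (x |: w) :\: [set y0 in s])] = false.
    apply/negbTE/negP => /forallP /(_ x); rewrite !inE eqxx xT (negbTE xs) /=; by [].
  have -> : [forall y, (y \in T :\: [set y0 in x :: s]) == (y \in w :\: [set y0 in x :: s])] =
            [forall y, (y \in T :\: [set y0 in s]) == (y \in (w :\ x) :\: [set y0 in s])].
    apply/forallP/forallP => H y; have := H y; rewrite !inE;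
    case: (eqVneq y x) => [->|ne]; rewrite ?xT ?(negbTE xs) //=.
  by case: ifP => _; ring.
Qed.

Lemma ES_link s h w : uniq s ->
  ES s h w = \big[Rplus/0]_(A : {set G}) (cf s w A * h A).
Proof.
elim: s w => [|x s IH] w /=.
- move=> _; rewrite (bigD1 w) //= big1 => [|T /negbTE TW].
  + by rewrite /cf !setD0 eqxx big_nil; ring.
  + by rewrite /cf !setD0 TW; ring.
- case/andP => xs us; rewrite !IH // !big_distrr -big_split /=.
  by apply: eq_bigr => T _; rewrite cf_step //; ring.
Qed.

Definition Ex (h : {set G} -> R) : R := \big[Rplus/0]_(A : {set G}) (weight p A * h A).

Lemma Ex_ES s h w : uniq s -> (forall y, y \in s) -> Ex h = ES s h w.
Proof.
move=> us alls; rewrite ES_link //; apply: eq_bigr => T _.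
have Sf : [set y in s] = setT by apply/setP => y; rewrite !inE alls.
rewrite /cf Sf !setDT eqxx; congr (_ * _).
rewrite /weight; apply: perm_big; apply: uniq_perm => //; first exact: index_enum_uniq.
by move=> y; rewrite alls mem_index_enum.
Qed.

Lemma ES_lin s c1 c2 h1 h2 w :
  ES s (fun a => c1 * h1 a + c2 * h2 a) w = c1 * ES s h1 w + c2 * ES s h2 w.
Proof. elim: s w => [|x s IH] w //=; rewrite !IH; ring. Qed.

Lemma ES_const s c w : ES s (fun _ => c) w = c.
Proof. elim: s w => [|x s IH] w //=; rewrite !IH; ring. Qed.

Lemma ES_mono s h1 h2 w : (forall a, h1 a <= h2 a) -> ES s h1 w <= ES s h2 w.
Proof.
move=> H; elim: s w => [|x s IH] w //=.
have := hp x => hx; have := IH (x |: w); have := IH (w :\ x).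
move=> A1 A2; apply: Rplus_le_compat; apply: Rmult_le_compat_l => //; lra.
Qed.

Lemma ES_cong (s : seq G) (h1 h2 : {set G} -> R) (w : {set G}) :
  (forall a : {set G}, (forall y, y \notin s -> (y \in a) = (y \in w)) -> h1 a = h2 a) ->
  ES s h1 w = ES s h2 w.
Proof.
elim: s w => [|x s IH] w /= H; first by apply: H.
rewrite (IH (x |: w)) ?(IH (w :\ x)) // => a Ha; apply: H => y; rewrite inE negb_or => /andP [yx ys];
  rewrite Ha // !inE (negbTE yx) //.
Qed.

Definition incr (f : {set G} -> R) := forall a b : {set G}, a \subset b -> f a <= f b.
Definition decr (f : {set G} -> R) := forall a b : {set G}, a \subset b -> f b <= f a.

Lemma ES_incr s f (w w' : {set G}) : incr f -> w \subset w' -> ES s f w <= ES s f w'.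
Proof.
move=> hf; elim: s w w' => [|x s IH] w w' /= ww'; first exact: hf.
have := hp x => hx.
apply: Rplus_le_compat; apply: Rmult_le_compat_l; try lra; apply: IH.
- exact: setUS.
- exact: setSD.
Qed.

Lemma ES_decr s f (w w' : {set G}) : decr f -> w \subset w' -> ES s f w' <= ES s f w.
Proof.
move=> hf; elim: s w w' => [|x s IH] w w' /= ww'; first exact: hf.
have := hp x => hx.
apply: Rplus_le_compat; apply: Rmult_le_compat_l; try lra; apply: IH.
- exact: setUS.
- exact: setSD.
Qed.

Lemma cheb (q F1 F0 G1 G0 : R) : 0 <= q <= 1 -> F0 <= F1 -> G1 <= G0 ->
  q * (F1 * G1) + (1 - q) * (F0 * G0) <= (q * F1 + (1 - q) * F0) * (q * G1 + (1 - q) * G0).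
Proof.
move=> hq hF hG.
have E : (q * F1 + (1 - q) * F0) * (q * G1 + (1 - q) * G0) - (q * (F1 * G1) + (1 - q) * (F0 * G0))
   = q * (1 - q) * ((F1 - F0) * (G0 - G1)) by ring.
have : 0 <= q * (1 - q) * ((F1 - F0) * (G0 - G1)).
  apply: Rmult_le_pos; apply: Rmult_le_pos; lra.
lra.
Qed.

Lemma harris_ES s f g w : incr f -> decr g ->
  ES s (fun a => f a * g a) w <= ES s f w * ES s g w.
Proof.
move=> hf hg; elim: s w => [|x s IH] w /=; first lra.
have := hp x => hx.
apply: Rle_trans; last apply: cheb => //.
- apply: Rplus_le_compat; apply: Rmult_le_compat_l; try lra; apply: IH.
- apply: ES_incr => //; apply/subsetP => y; rewrite !inE => /andP [_ ->]; by rewrite orbT.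
- apply: ES_decr => //; apply/subsetP => y; rewrite !inE => /andP [_ ->]; by rewrite orbT.
Qed.

End ES.

Section Dep.
Variable G : finType.
Variable p : G -> R.
Hypothesis hp : forall x, 0 <= p x <= 1.
Local Notation ES := (ES p).
Local Notation Ex := (Ex p).

Definition typ_at (y : G) (w : {set G}) := (p y = 1 -> y \in w) /\ (p y = 0 -> y \notin w).
Definition typical (w : {set G}) := forall y, typ_at y w.

Lemma typ_U z y w : (z = y -> p y <> 0) -> (z <> y -> typ_at z w) -> typ_at z (y |: w).
Proof.
case: (eqVneq z y) => [->|/eqP ne] H1 H2.
- split => h; first by rewrite setU11. by have := H1 erefl.
- have [a b] := H2 ne; split => h.
  + by rewrite !inE a ?orbT.
  + by rewrite !inE (introF eqP ne) b.
Qed.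

Lemma typ_D z y w : (z = y -> p y <> 1) -> (z <> y -> typ_at z w) -> typ_at z (w :\ y).
Proof.
case: (eqVneq z y) => [->|/eqP ne] H1 H2.
- split => h; last by rewrite setD11. by have := H1 erefl.
- have [a b] := H2 ne; split => h.
  + by rewrite !inE (introF eqP ne) a.
  + by rewrite !inE (introF eqP ne) b.
Qed.

Lemma sUD (x y : G) (w : {set G}) : x != y -> (x |: w) :\ y = x |: (w :\ y).
Proof.
move=> xy; apply/setP => z; rewrite !inE; case: (eqVneq z x) => [->|zx] /=.
  by rewrite (negbTE xy).
by case: (z == y).
Qed.

Lemma sDD (x y : G) (w : {set G}) : (w :\ x) :\ y = (w :\ y) :\ x.
Proof. by apply/setP => z; rewrite !inE; case: (z == x); case: (z == y). Qed.

Lemma sUU (x y : G) (w : {set G}) : x |: (y |: w) = y |: (x |: w).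
Proof. by apply/setP => z; rewrite !inE; case: (z == x); case: (z == y). Qed.

Lemma mul_ne0 (q a b : R) : (q <> 0 -> a = b) -> q * a = q * b.
Proof. move=> H; case: (Req_EM_T q 0) => [->|/H ->]; ring. Qed.

Lemma ES_inv s f x w : x \notin s -> 0 < p x < 1 ->
  (forall a, typical a -> f (x |: a) = f (a :\ x)) ->
  (forall y, y \notin s -> y <> x -> typ_at y w) ->
  ES s f (x |: w) = ES s f (w :\ x).
Proof.
move=> + hx hf; elim: s w => [|y s IH] w /=.
- move=> _ H; apply: hf => z; case: (eqVneq z x) => [->|/eqP ne]; last exact: H.
  split => h; lra.
- rewrite inE negb_or => /andP [xy xs] H.
  have yx : y != x by rewrite eq_sym.
  rewrite (sUU y x) (sUD _ xy) -(sUD _ yx) (sDD x y).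
  congr (_ + _); apply: mul_ne0 => hy; apply: IH => // z zs zx.
  + apply: typ_U => [_|zy] //; apply: H => //; rewrite inE negb_or zs andbT; exact/eqP.
  + apply: typ_D => [_|zy]; first lra. apply: H => //; rewrite inE negb_or zs andbT; exact/eqP.
Qed.

Lemma fact_ES s f g w : uniq s ->
  (forall y, y \notin s -> typ_at y w) ->
  (forall x, x \in s -> 0 < p x < 1 ->
     (forall a, typical a -> f (x |: a) = f (a :\ x)) \/
     (forall a, typical a -> g (x |: a) = g (a :\ x))) ->
  ES s (fun a => f a * g a) w = ES s f w * ES s g w.
Proof.
elim: s w => [|x s IH] w //= /andP [xs us] Hw Hx.
have Hx' : forall y, y \in s -> 0 < p y < 1 ->
     (forall a, typical a -> f (y |: a) = f (a :\ y)) \/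
     (forall a, typical a -> g (y |: a) = g (a :\ y)).
  by move=> y ys; apply: Hx; rewrite inE ys orbT.
have HU : p x <> 0 -> forall y, y \notin s -> typ_at y (x |: w).
  move=> hh y ys; apply: typ_U => [_|yx] //; apply: Hw; rewrite inE negb_or ys andbT; exact/eqP.
have HD : p x <> 1 -> forall y, y \notin s -> typ_at y (w :\ x).
  move=> hh y ys; apply: typ_D => [_|yx] //; apply: Hw; rewrite inE negb_or ys andbT; exact/eqP.
have := hp x => hx.
case: (Req_EM_T (p x) 0) => [h0|n0].
  rewrite h0 (IH (w :\ x)) //; first ring. apply: HD; lra.
case: (Req_EM_T (p x) 1) => [h1|n1].
  rewrite h1 (IH (x |: w)) //; first ring. exact: HU.
rewrite !IH //; try (apply: HU || apply: HD); auto.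
have hx' : 0 < p x < 1 by lra.
have Hw' : forall y, y \notin s -> y <> x -> typ_at y w.
  move=> y ys yx; apply: Hw; rewrite inE negb_or ys andbT; exact/eqP.
case: (Hx x (mem_head _ _) hx') => H.
- rewrite (ES_inv xs hx' H Hw'); ring.
- rewrite (ES_inv xs hx' H Hw'); ring.
Qed.

Lemma ES_shiftU x s h w : x \notin s -> ES s (fun a => h (x |: a)) w = ES s h (x |: w).
Proof.
elim: s w => [|y s IH] w //=; rewrite inE negb_or => /andP [xy xs].
by rewrite !IH // (sUU x y) (sUD _ xy).
Qed.

Lemma ES_shiftD x s h w : x \notin s -> ES s (fun a => h (a :\ x)) w = ES s h (w :\ x).
Proof.
elim: s w => [|y s IH] w //=; rewrite inE negb_or => /andP [xy xs].
have yx : y != x by rewrite eq_sym.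
by rewrite !IH // (sUD _ yx) (sDD y x).
Qed.

Definition ind (E : event G) (a : {set G}) : R := if a \in E then 1 else 0.

Lemma Pr_Ex E : Pr p E = Ex (ind E).
Proof.
rewrite /Pr /Ex (big_mkcond (fun A => A \in E)) /=; apply: eq_bigr => A _.
rewrite /ind; case: ifP => _; ring.
Qed.

Lemma ind_I E F a : ind (E :&: F) a = ind E a * ind F a.
Proof. rewrite /ind inE; case: (a \in E); case: (a \in F) => /=; ring. Qed.

Lemma ind_ge0 E a : 0 <= ind E a.
Proof. rewrite /ind; case: ifP => _; lra. Qed.

Lemma weight_ge0 A : 0 <= weight p A.
Proof.
rewrite /weight; apply: (big_ind (fun x => 0 <= x)); first lra.
  by move=> a b; apply: Rmult_le_pos.
move=> y _; have := hp y; case: ifP => _; lra.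
Qed.

Lemma weight_gt0 A : typical A -> 0 < weight p A.
Proof.
move=> tA; rewrite /weight; apply: (big_ind (fun x => 0 < x)); first lra.
  by move=> a b; apply: Rmult_lt_0_compat.
move=> y _; have := hp y; have [a b] := tA y; case: ifP => yA hy.
- case: (Req_EM_T (p y) 0) => [h|h]; last lra. by have := b h; rewrite yA.
- case: (Req_EM_T (p y) 1) => [h|h]; last lra. by have := a h; rewrite yA.
Qed.

Definition increasing (E : event G) := forall A A' : {set G}, A \in E -> A \subset A' -> A' \in E.

Lemma incr_ind E : increasing E -> incr (ind E).
Proof.
move=> hE a b ab; rewrite /ind; case: ifP => ha; first by rewrite (hE _ _ ha ab); lra.
case: ifP => _; lra.
Qed.

Definition depE (E : event G) x := exists w, typical w /\ x |: w \in E /\ w :\ x \notin E.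

Lemma subD1U (x : G) (w : {set G}) : w :\ x \subset x |: w.
Proof. apply/subsetP => y; rewrite !inE => /andP [_ ->]; by rewrite orbT. Qed.

Lemma ndep_inv E x : increasing E -> ~ depE E x ->
  forall a, typical a -> (x |: a \in E) = (a :\ x \in E).
Proof.
move=> hE nd a ta; apply/idP/idP => h.
- apply/negPn/negP => h'; apply: nd; exists a; split => //.
- exact: (hE _ _ h (subD1U x a)).
Qed.

Lemma Ex_ES0 s h : uniq s -> (forall y, y \in s) -> Ex h = ES s h set0.
Proof. move=> u a; exact: Ex_ES. Qed.

Lemma Ex_pos_witness h w : (forall a, 0 <= h a) -> typical w -> 0 < h w -> 0 < Ex h.
Proof.
move=> h0 tw hw; rewrite /Ex (bigD1 w) //=.
have : 0 <= \big[Rplus/0]_(i | i != w) (weight p i * h i).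
  apply: (big_ind (fun x => 0 <= x)); first lra. by move=> a b; lra.
  move=> i _; apply: Rmult_le_pos; [exact: weight_ge0|exact: h0].
have := weight_gt0 tw => wp.
have : 0 < weight p w * h w by apply: Rmult_lt_0_compat.
move=> H1 H2; exact: Rplus_lt_le_0_compat H1 H2.
Qed.


Lemma ES_ext s h1 h2 w : (forall a, h1 a = h2 a) -> ES s h1 w = ES s h2 w.
Proof. by move=> H; apply: ES_cong => a _; apply: H. Qed.

Lemma harris_up s f g w : incr f -> incr g ->
  ES s f w * ES s g w <= ES s (fun a => f a * g a) w.
Proof.
move=> hf hg.
have hd : decr (fun a => -1 * g a + 0 * g a) by move=> a b ab; have := hg a b ab; lra.
have := harris_ES hp s w hf hd.
rewrite (ES_lin p s (-1) 0 g g) (ES_ext s (h2 := fun a => -1 * (f a * g a) + 0 * (f a * g a))).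
  rewrite (ES_lin p s (-1) 0); lra.
by move=> a; ring.
Qed.

Lemma sUU1 (x : G) (a : {set G}) : x |: (x |: a) = x |: a.
Proof. by rewrite setUA setUid. Qed.

Lemma sUD1 (x : G) (a : {set G}) : (x |: a) :\ x = a :\ x.
Proof. apply/setP => z; rewrite !inE; by case: (z == x). Qed.

Lemma FF_pos E x s : increasing E -> depE E x -> uniq (x :: s) -> (forall y, y \in x :: s) ->
  0 < ES s (ind E) (x |: set0) - ES s (ind E) set0.
Proof.
move=> hE [w [tw [w1 w2]]] us alls.
have xs : x \notin s by move: us => /= /andP [].
set DA := fun a => 1 * ind E (x |: a) + (-1) * ind E (a :\ x).
have e1 : ES s (ind E) (x |: set0) - ES s (ind E) set0 = ES s DA set0.
  rewrite /DA ES_lin ES_shiftU // ES_shiftD // set0D; ring.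
have e2 : Ex DA = ES s DA set0.
  rewrite (Ex_ES0 _ us alls) /= set0D.
  rewrite -(ES_shiftU _ _ xs) (ES_ext s (h2 := DA)); first ring.
  by move=> a; rewrite /DA sUU1 sUD1.
rewrite e1 -e2; apply: (Ex_pos_witness (w := w)) => //.
- move=> a; rewrite /DA /ind; case: ifP => h1; case: ifP => h2; try lra.
  by rewrite (hE _ _ h2 (subD1U x a)) in h1.
- by rewrite /DA /ind w1 (negbTE w2); lra.
Qed.

Lemma dep_cov E F x : increasing E -> increasing F -> 0 < p x < 1 ->
  depE E x -> depE F x -> Ex (ind E) * Ex (ind F) < Ex (fun a => ind E a * ind F a).
Proof.
move=> hE hF hx dE dF.
set s' := rem x (index_enum G).
have us : uniq (x :: s').
  rewrite /= rem_uniq ?index_enum_uniq // andbT /s'.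
  by rewrite mem_rem_uniq ?index_enum_uniq // inE eqxx.
have alls : forall y, y \in x :: s'.
  move=> y; rewrite inE /s' mem_rem_uniq ?index_enum_uniq // inE mem_index_enum andbT.
  by case: (y == x).
have xs : x \notin s' by move: us => /= /andP [].
rewrite !(Ex_ES0 _ us alls) /= !set0D.
set F1 := ES s' (ind E) (x |: set0).
set F0 := ES s' (ind E) set0.
set G1 := ES s' (ind F) (x |: set0).
set G0 := ES s' (ind F) set0.
have Hr : forall w, ES s' (ind E) w * ES s' (ind F) w <= ES s' (fun a => ind E a * ind F a) w.
  by move=> w; apply: harris_up; apply: incr_ind.
have f1 := FF_pos hE dE us alls; have g1 := FF_pos hF dF us alls.
rewrite -/F1 -/F0 in f1; rewrite -/G1 -/G0 in g1.
have h1 := Hr (x |: set0); have h0 := Hr set0.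
rewrite -/F1 -/G1 in h1; rewrite -/F0 -/G0 in h0.
have E1 : (p x * F1 + (1 - p x) * F0) * (p x * G1 + (1 - p x) * G0) =
   p x * (F1 * G1) + (1 - p x) * (F0 * G0) - p x * (1 - p x) * ((F1 - F0) * (G1 - G0)) by ring.
have : 0 < p x * (1 - p x) * ((F1 - F0) * (G1 - G0)).
  apply: Rmult_lt_0_compat; [apply: Rmult_lt_0_compat; lra| apply: Rmult_lt_0_compat; lra].
have hx0 := hp x.
have : p x * (F1 * G1) <= p x * ES s' (fun a => ind E a * ind F a) (x |: set0) by apply: Rmult_le_compat_l; [lra|exact h1].
have : (1 - p x) * (F0 * G0) <= (1 - p x) * ES s' (fun a => ind E a * ind F a) set0 by apply: Rmult_le_compat_l; [lra|exact h0].
lra.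
Qed.


End Dep.

Lemma exp_le x y : x <= y -> exp x <= exp y.
Proof. case/Rle_lt_or_eq_dec => [h|->]; [left; exact: exp_increasing|right; done]. Qed.

Lemma analytic (psi psi' : R -> R) (a Th : R) :
  (forall s, derivable_pt_lim psi s (psi' s)) -> psi 0 = 1 ->
  (forall s, 0 <= s -> psi' s <= - (psi s * (a - Th * s))) ->
  forall s, 0 <= s -> psi s <= exp (- (a * s) + Th * s ^ 2 / 2).
Proof.
move=> dpsi p0 key s s0.
set g := fun s : R => a * s + (- Th / 2) * (s * s).
have dg : forall s, derivable_pt_lim g s (a - Th * s).
  move=> u; rewrite /g.
  have -> : a - Th * u = a * 1 + (- Th / 2) * (1 * u + u * 1) by field.
  apply: derivable_pt_lim_plus; apply: derivable_pt_lim_scal.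
    exact: derivable_pt_lim_id.
  apply: (derivable_pt_lim_mult id id); exact: derivable_pt_lim_id.
set k := fun s => psi s * exp (g s).
set k' := fun s => psi' s * exp (g s) + psi s * (exp (g s) * (a - Th * s)).
have dk : forall s, derivable_pt_lim k s (k' s).
  move=> u; apply: derivable_pt_lim_mult => //.
  apply: (derivable_pt_lim_comp g exp) => //; exact: derivable_pt_lim_exp.
have k0 : k 0 = 1.
  rewrite /k /g p0; have -> : a * 0 + - Th / 2 * (0 * 0) = 0 by ring.
  rewrite exp_0; ring.
have ks : k s <= 1.
  case: (Rle_lt_or_eq_dec _ _ s0) => [sp|<-]; last by rewrite k0; lra.
  have [c [hc hc2]] := MVT_cor2 k k' 0 s sp (fun c _ => dk c).
  have : k' c <= 0.
    rewrite /k'; have := key c (ltac:(lra)); have := exp_pos (g c) => ep.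
    have -> : psi' c * exp (g c) + psi c * (exp (g c) * (a - Th * c)) =
              exp (g c) * (psi' c + psi c * (a - Th * c)) by ring.
    move=> h; rewrite -(Rmult_0_r (exp (g c))); apply: Rmult_le_compat_l; lra.
  move=> h.
  have : k' c * (s - 0) <= 0 by have := Rmult_le_compat_r (s - 0) (k' c) 0 ltac:(lra) h; rewrite Rmult_0_l.
  lra.
have E : exp (- (a * s) + Th * s ^ 2 / 2) = exp (- g s) by congr exp; rewrite /g; field.
rewrite E.
have e1 : exp (g s) * exp (- g s) = 1 by rewrite -exp_plus Rplus_opp_r exp_0.
have ep := exp_pos (- g s).
have : k s * exp (- g s) <= 1 * exp (- g s) by apply: Rmult_le_compat_r; lra.
rewrite /k Rmult_assoc e1; lra.
Qed.

Lemma sumR_split (T : Type) (r : seq T) (P : pred T) (F H : T -> R) :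
  \big[Rplus/0]_(i <- r | P i) (F i + H i) = \big[Rplus/0]_(i <- r | P i) F i + \big[Rplus/0]_(i <- r | P i) H i.
Proof. by rewrite big_split. Qed.

Lemma sumR_distr (T : Type) (r : seq T) (P : pred T) (c : R) (F : T -> R) :
  \big[Rplus/0]_(i <- r | P i) (c * F i) = c * \big[Rplus/0]_(i <- r | P i) F i.
Proof. by rewrite big_distrr. Qed.

Lemma sumR_lin (T : Type) (r : seq T) (P : pred T) (c d : R) (F H : T -> R) :
  \big[Rplus/0]_(i <- r | P i) (c * F i + d * H i) = c * \big[Rplus/0]_(i <- r | P i) F i + d * \big[Rplus/0]_(i <- r | P i) H i.
Proof. by rewrite sumR_split !sumR_distr. Qed.

Lemma sum_le (T : Type) (r : seq T) (P : pred T) (F H : T -> R) :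
  (forall i, P i -> F i <= H i) ->
  \big[Rplus/0]_(i <- r | P i) F i <= \big[Rplus/0]_(i <- r | P i) H i.
Proof.
move=> h; apply: (big_ind2 (fun x y => x <= y)); [lra| move=> *; lra | exact: h].
Qed.

Lemma sum_ge0 (T : Type) (r : seq T) (P : pred T) (F : T -> R) :
  (forall i, P i -> 0 <= F i) -> 0 <= \big[Rplus/0]_(i <- r | P i) F i.
Proof. move=> h; apply: (big_ind (fun x => 0 <= x)); [lra| move=> *; lra | exact: h]. Qed.

Lemma deriv_sum (T : Type) (r : seq T) (c x : T -> R) s :
  derivable_pt_lim (fun s => \big[Rplus/0]_(A <- r) (c A * exp (- s * x A))) s
    (\big[Rplus/0]_(A <- r) (c A * (- x A * exp (- s * x A)))).
Proof.
elim: r => [|A r IH].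
  rewrite big_nil; have := derivable_pt_lim_const 0 s.
  by apply: derivable_pt_lim_ext => u; rewrite big_nil.
rewrite big_cons.
have H : derivable_pt_lim (fun s => c A * exp (- s * x A) + \big[Rplus/0]_(A <- r) (c A * exp (- s * x A))) s
   (c A * (- x A * exp (- s * x A)) + \big[Rplus/0]_(A <- r) (c A * (- x A * exp (- s * x A)))).
  apply: derivable_pt_lim_plus => //; apply: derivable_pt_lim_scal.
  have -> : - x A * exp (- s * x A) = exp (- s * x A) * (- x A * 1) by ring.
  apply: (derivable_pt_lim_comp (fun s => - s * x A) exp); last exact: derivable_pt_lim_exp.
  have := derivable_pt_lim_scal id (- x A) s 1 (derivable_pt_lim_id s).
  by apply: derivable_pt_lim_ext => u; rewrite /mult_real_fct /id; ring.
by move: H; apply: derivable_pt_lim_ext => u; rewrite big_cons.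
Qed.

Section ExS.
Variable G : finType.
Variable p : G -> R.
Hypothesis hp : forall x, 0 <= p x <= 1.
Local Notation Ex := (Ex p).

Lemma Ex_lin c1 c2 h1 h2 : Ex (fun a => c1 * h1 a + c2 * h2 a) = c1 * Ex h1 + c2 * Ex h2.
Proof.
rewrite /Ex.
have -> : \big[Rplus/0]_(A : {set G}) (weight p A * (c1 * h1 A + c2 * h2 A)) =
  \big[Rplus/0]_(A : {set G}) (c1 * (weight p A * h1 A) + c2 * (weight p A * h2 A)).
  by apply: eq_bigr => A _; ring.
by rewrite big_split !big_distrr.
Qed.

Lemma Ex_ext h1 h2 : (forall a, h1 a = h2 a) -> Ex h1 = Ex h2.
Proof. by move=> H; apply: eq_bigr => A _; rewrite H. Qed.

Lemma Ex_mono h1 h2 : (forall a, h1 a <= h2 a) -> Ex h1 <= Ex h2.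
Proof.
move=> H; apply: sum_le => A _; apply: Rmult_le_compat_l; [exact: weight_ge0|exact: H].
Qed.

Lemma Ex_ge0 h : (forall a, 0 <= h a) -> 0 <= Ex h.
Proof. move=> H; apply: sum_ge0 => A _; apply: Rmult_le_pos; [exact: weight_ge0|exact: H]. Qed.

Lemma Ex_const c : Ex (fun _ => c) = c.
Proof. rewrite (Ex_ES0 p _ (index_enum_uniq G) (@mem_index_enum G)); exact: ES_const. Qed.

Lemma Ex_sum (I : finType) (P : pred I) (F : I -> {set G} -> R) :
  Ex (fun a => \big[Rplus/0]_(i | P i) F i a) = \big[Rplus/0]_(i | P i) Ex (F i).
Proof.
rewrite /Ex.
have -> : \big[Rplus/0]_(A : {set G}) (weight p A * \big[Rplus/0]_(i | P i) F i A) =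
  \big[Rplus/0]_(A : {set G}) \big[Rplus/0]_(i | P i) (weight p A * F i A).
  by apply: eq_bigr => A _; rewrite big_distrr.
by rewrite exchange_big.
Qed.

Lemma harris_Ex f g : incr f -> decr g -> Ex (fun a => f a * g a) <= Ex f * Ex g.
Proof.
move=> hf hg; rewrite !(Ex_ES0 p _ (index_enum_uniq G) (@mem_index_enum G)).
exact: harris_ES.
Qed.

Lemma fact_Ex f g :
  (forall x, 0 < p x < 1 ->
     (forall a, typical p a -> f (x |: a) = f (a :\ x)) \/
     (forall a, typical p a -> g (x |: a) = g (a :\ x))) ->
  Ex (fun a => f a * g a) = Ex f * Ex g.
Proof.
move=> H; rewrite !(Ex_ES0 p _ (index_enum_uniq G) (@mem_index_enum G)).
apply: fact_ES => //; [exact: index_enum_uniq| by move=> y; rewrite mem_index_enum | by move=> x _; apply: H].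
Qed.

End ExS.

Lemma card_INR (I : finType) (P : pred I) :
  INR #|[set i | P i]| = \big[Rplus/0]_(i : I) (if P i then 1 else 0).
Proof.
rewrite cardsE -sum1_card (big_morph INR plus_INR (erefl (INR 0))) big_mkcond /=.
by [].
Qed.

Lemma sum_nat (T : Type) (r : seq T) (F : T -> R) :
  (forall i, F i = 0 \/ F i = 1) -> exists m, \big[Rplus/0]_(i <- r) F i = INR m.
Proof.
move=> H; apply: (big_ind (fun x => exists m, x = INR m)).
- by exists 0%nat.
- by move=> x y [m ->] [n ->]; exists (m + n)%nat; rewrite plus_INR.
- by move=> i _; case: (H i) => ->; [exists 0%nat | exists 1%nat].
Qed.

Lemma INR_quad m : 0 <= (INR m - 1) * (INR m - 2).
Proof.
case: m => [|[|[|m]]] /=; try lra.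
have := pos_INR m => h.
have -> : (match m with | 0%nat => 1 | S _ => INR m + 1 end + 1 + 1) = INR m + 3.
  by case: m h => [|m] h //=; ring.
nra.
Qed.

Section Main.
Variables (G I J : finType) (p : G -> R) (B : I -> J -> event G).
Hypothesis hp : forall x, 0 <= p x <= 1.
Hypothesis hinc : forall i j, increasing_event (B i j).
Local Notation Ex := (Ex p).
Local Notation X := (Xval B).

Lemma X_sum a : X a = \big[Rplus/0]_(i : I) ind (Bi B i) a.
Proof. by rewrite /Xval card_INR. Qed.

Lemma incr_cup (P : pred J) k : increasing (\bigcup_(l | P l) B k l).
Proof.
move=> A A' /bigcupP [l Pl hA] AA'; apply/bigcupP; exists l => //; exact: (hinc hA AA').
Qed.

Lemma incr_I (E F : event G) : increasing E -> increasing F -> increasing (E :&: F).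
Proof.
move=> hE hF A A'; rewrite !inE => /andP [a b] AA'; by rewrite (hE _ _ a AA') (hF _ _ b AA').
Qed.

Lemma incr_Bi i : increasing (Bi B i).
Proof. exact: (@incr_cup predT i). Qed.

Lemma incr_sum (F : I -> {set G} -> R) : (forall i, incr (F i)) -> incr (fun a => \big[Rplus/0]_(i : I) F i a).
Proof. move=> H a b ab; apply: sum_le => i _; exact: H. Qed.

Lemma decr_exp (f : {set G} -> R) s : 0 <= s -> incr f -> decr (fun a => exp (- s * f a)).
Proof.
move=> s0 hf a b ab; apply: exp_le; have := hf a b ab => h.
have : s * f a <= s * f b by apply: Rmult_le_compat_l.
lra.
Qed.

Lemma X_incr : incr X.
Proof. move=> a b ab; rewrite !X_sum; apply: sum_le => i _; exact: (incr_ind (@incr_Bi i) ab). Qed.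

Lemma ind01 (E : event G) a : ind E a = 0 \/ ind E a = 1.
Proof. rewrite /ind; case: ifP; auto. Qed.

Lemma point_a i a :
  \big[Rplus/0]_(j : J) ind (B i j) a
  - / 2 * \big[Rplus/0]_(j : J) \big[Rplus/0]_(k : J | k != j) (ind (B i j) a * ind (B i k) a)
  <= ind (Bi B i) a.
Proof.
set n := \big[Rplus/0]_(j : J) ind (B i j) a.
have E : \big[Rplus/0]_(j : J) \big[Rplus/0]_(k : J | k != j) (ind (B i j) a * ind (B i k) a)
   = n * n - n.
  have -> : n * n - n = \big[Rplus/0]_(j : J) (ind (B i j) a * (n - ind (B i j) a)).
    rewrite /n.
    have : \big[Rplus/0]_(j : J) (ind (B i j) a * (n - ind (B i j) a)) =
           \big[Rplus/0]_(j : J) (n * ind (B i j) a + (-1) * ind (B i j) a).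
      apply: eq_bigr => j _; case: (ind01 (B i j) a) => ->; ring.
    rewrite /n => ->; rewrite sumR_lin; ring.
  apply: eq_bigr => j _; rewrite sumR_distr; congr (_ * _); rewrite /n [X in _ = X - _](bigD1 j) //=; ring.
rewrite E.
have [m hm] : exists m, n = INR m by apply: sum_nat => j; exact: ind01.
case: (boolP (a \in Bi B i)) => hi.
- have -> : ind (Bi B i) a = 1 by rewrite /ind hi.
  rewrite hm; have := INR_quad m; nra.
- have -> : ind (Bi B i) a = 0 by rewrite /ind (negbTE hi).
  have n0 : n = 0.
    rewrite /n big1 // => j _; rewrite /ind; case: ifP => // h.
    by move: hi => /bigcupP; case; exists j.
  rewrite n0; lra.
Qed.

Definition EE s a := exp (- s * X a).

Lemma EE_ge0 s a : 0 <= EE s a.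
Proof. left; exact: exp_pos. Qed.

Lemma EE_decr s : 0 <= s -> decr (EE s).
Proof. move=> s0; exact: decr_exp s0 X_incr. Qed.

Lemma L_i s i : 0 <= s ->
  \big[Rplus/0]_(j : J) Ex (fun a => ind (B i j) a * EE s a)
  - / 2 * \big[Rplus/0]_(j : J) \big[Rplus/0]_(k : J | k != j) (Pr p (B i j :&: B i k) * Ex (EE s))
  <= Ex (fun a => ind (Bi B i) a * EE s a).
Proof.
move=> s0.
set rhs := fun a => 1 * \big[Rplus/0]_(j : J) (ind (B i j) a * EE s a)
   + (- / 2) * \big[Rplus/0]_(j : J) \big[Rplus/0]_(k : J | k != j) (ind (B i j :&: B i k) a * EE s a).
have h1 : Ex rhs <= Ex (fun a => ind (Bi B i) a * EE s a).
  apply: (Ex_mono hp) => a; rewrite /rhs.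
  have := point_a i a; have := EE_ge0 s a => e h.
  have := Rmult_le_compat_r _ _ _ e h.
  move=> h'.
  have e1 : \big[Rplus/0]_(j : J) (ind (B i j) a * EE s a) = (\big[Rplus/0]_(j : J) ind (B i j) a) * EE s a.
    rewrite Rmult_comm -sumR_distr; apply: eq_bigr => j _; ring.
  have e2 : \big[Rplus/0]_(j : J) \big[Rplus/0]_(k : J | k != j) (ind (B i j :&: B i k) a * EE s a) =
      (\big[Rplus/0]_(j : J) \big[Rplus/0]_(k : J | k != j) (ind (B i j) a * ind (B i k) a)) * EE s a.
    rewrite Rmult_comm -sumR_distr; apply: eq_bigr => j _; rewrite -sumR_distr; apply: eq_bigr => k _.
    rewrite ind_I; ring.
  rewrite e1 e2; rewrite Rmult_minus_distr_r Rmult_assoc in h'; lra.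
apply: Rle_trans h1.
rewrite /rhs Ex_lin !Ex_sum.
have : \big[Rplus/0]_(j : J) Ex (fun a => \big[Rplus/0]_(k : J | k != j) (ind (B i j :&: B i k) a * EE s a))
   <= \big[Rplus/0]_(j : J) \big[Rplus/0]_(k : J | k != j) (Pr p (B i j :&: B i k) * Ex (EE s)).
  apply: sum_le => j _; rewrite Ex_sum; apply: sum_le => k _.
  rewrite Pr_Ex; apply: (harris_Ex hp); last exact: EE_decr.
  apply: incr_ind; apply: incr_I; [exact: hinc|exact: hinc].
lra.
Qed.

Definition UU i j k := \bigcup_(l | rel_dep p B i j k l) B k l.
Definition VV i j k := \bigcup_(l | ~~ rel_dep p B i j k l) B k l.
Definition uu i j a := \big[Rplus/0]_(k : I) ind (UU i j k) a.
Definition vv i j a := \big[Rplus/0]_(k : I) ind (VV i j k) a.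
Definition Ev i j s a := exp (- s * vv i j a).

Lemma indep_of i j k l : ~~ rel_dep p B i j k l ->
  Pr p (B i j :&: B k l) = Pr p (B i j) * Pr p (B k l).
Proof. rewrite /rel_dep negb_or => /andP [_]; rewrite /dependentb; by case: Req_EM_T. Qed.

Lemma nodep i j k l x : ~~ rel_dep p B i j k l -> 0 < p x < 1 ->
  depE p (B i j) x -> ~ depE p (B k l) x.
Proof.
move=> nr hx d1 d2; have := dep_cov hp (@hinc i j) (@hinc k l) hx d1 d2.
have -> : Ex (fun a => ind (B i j) a * ind (B k l) a) = Ex (ind (B i j :&: B k l)).
  by apply: Ex_ext => a; rewrite ind_I.
rewrite -!Pr_Ex indep_of //; lra.
Qed.

Lemma vv_incr i j : incr (vv i j).
Proof.
move=> a b ab; apply: sum_le => k _; apply: (incr_ind _ ab).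
exact: (@incr_cup (fun l => ~~ rel_dep p B i j k l) k).
Qed.

Lemma fact_ij i j s : Ex (fun a => ind (B i j) a * Ev i j s a) = Pr p (B i j) * Ex (Ev i j s).
Proof.
rewrite Pr_Ex; apply: (fact_Ex hp) => x hx; case: (classic (depE p (B i j) x)) => d.
- right => a ta; rewrite /Ev /vv; congr exp; congr (_ * _); apply: eq_bigr => k _.
  rewrite /ind.
  suff -> : (x |: a \in VV i j k) = (a :\ x \in VV i j k) by [].
  apply/bigcupP/bigcupP => [[l hl hm]|[l hl hm]]; exists l => //.
  + by rewrite -(ndep_inv (@hinc k l) (nodep hl hx d) ta).
  + by rewrite (ndep_inv (@hinc k l) (nodep hl hx d) ta).
- left => a ta; by rewrite /ind (ndep_inv (@hinc i j) d ta).
Qed.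

Lemma ind_le_bi i j k a : ind (Bi B k) a <= ind (UU i j k) a + ind (VV i j k) a.
Proof.
rewrite /ind; case: ifP => h; last by case: ifP; case: ifP => _ _; lra.
move/bigcupP: h => [l _ hl].
case: (boolP (rel_dep p B i j k l)) => r.
- have -> : a \in UU i j k by apply/bigcupP; exists l.
  case: ifP => _; lra.
- have -> : a \in VV i j k by apply/bigcupP; exists l.
  case: ifP => _; lra.
Qed.

Lemma vv_le_X i j a : vv i j a <= X a.
Proof.
rewrite X_sum; apply: sum_le => k _; rewrite /ind; case: ifP => h; last by case: ifP => _; lra.
have -> : a \in Bi B k.
  by move/bigcupP: h => [l _ hl]; apply/bigcupP; exists l.
lra.
Qed.

Lemma X_le_uv i j a : X a <= uu i j a + vv i j a.
Proof. rewrite X_sum /uu /vv -sumR_split; apply: sum_le => k _; exact: ind_le_bi. Qed.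

Lemma Ev_ge0 i j s a : 0 <= Ev i j s a.
Proof. left; exact: exp_pos. Qed.

Lemma L_ij i j s : 0 <= s ->
  Ex (EE s) * (Pr p (B i j) - s * \big[Rplus/0]_(k : I) Pr p (B i j :&: UU i j k))
  <= Ex (fun a => ind (B i j) a * EE s a).
Proof.
move=> s0.
set rhs := fun a => 1 * (ind (B i j) a * Ev i j s a)
   + (- s) * \big[Rplus/0]_(k : I) (ind (B i j :&: UU i j k) a * Ev i j s a).
have h1 : Ex rhs <= Ex (fun a => ind (B i j) a * EE s a).
  apply: (Ex_mono hp) => a; rewrite /rhs.
  have e1 : \big[Rplus/0]_(k : I) (ind (B i j :&: UU i j k) a * Ev i j s a)
      = ind (B i j) a * uu i j a * Ev i j s a.
    have -> : ind (B i j) a * uu i j a * Ev i j s a = (ind (B i j) a * Ev i j s a) * uu i j a by ring.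
    rewrite /uu -sumR_distr; apply: eq_bigr => k _; rewrite ind_I; ring.
  rewrite e1.
  have hX := X_le_uv i j a.
  have hE : exp (- s * uu i j a) * Ev i j s a <= EE s a.
    rewrite /Ev /EE -exp_plus; apply: exp_le.
    have : s * X a <= s * (uu i j a + vv i j a) by apply: Rmult_le_compat_l.
    lra.
  have hE2 : (1 + (- s * uu i j a)) * Ev i j s a <= exp (- s * uu i j a) * Ev i j s a.
    apply: Rmult_le_compat_r; [exact: Ev_ge0| exact: exp_ineq1_le].
  have hi := ind_ge0 (B i j) a.
  have : ind (B i j) a * ((1 + (- s * uu i j a)) * Ev i j s a) <= ind (B i j) a * EE s a.
    apply: Rmult_le_compat_l => //; lra.
  move=> h; apply: Rle_trans h; right; ring.
rewrite /rhs Ex_lin Ex_sum fact_ij in h1.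
have h2 : \big[Rplus/0]_(k : I) Ex (fun a => ind (B i j :&: UU i j k) a * Ev i j s a)
   <= \big[Rplus/0]_(k : I) (Pr p (B i j :&: UU i j k) * Ex (Ev i j s)).
  apply: sum_le => k _; rewrite Pr_Ex; apply: (harris_Ex hp).
  + apply: incr_ind; apply: incr_I; first exact: (@hinc i j).
    exact: (@incr_cup (fun l => rel_dep p B i j k l) k).
  + exact: decr_exp s0 (@vv_incr i j).
have e3 : \big[Rplus/0]_(k : I) (Pr p (B i j :&: UU i j k) * Ex (Ev i j s))
   = (\big[Rplus/0]_(k : I) Pr p (B i j :&: UU i j k)) * Ex (Ev i j s).
  by rewrite Rmult_comm -sumR_distr; apply: eq_bigr => k _; ring.
rewrite e3 in h2.
set c := Pr p (B i j) - s * \big[Rplus/0]_(k : I) Pr p (B i j :&: UU i j k).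
have hEv : Ex (EE s) <= Ex (Ev i j s).
  apply: (Ex_mono hp) => a; rewrite /EE /Ev; apply: exp_le.
  have : s * vv i j a <= s * X a by apply: Rmult_le_compat_l => //; exact: vv_le_X.
  lra.
have hE0 : 0 <= Ex (EE s) by apply: (Ex_ge0 hp) => a; exact: EE_ge0.
have lo : Ex (Ev i j s) * c <= 1 * (Pr p (B i j) * Ex (Ev i j s)) + - s *
   \big[Rplus/0]_(k : I) Ex (fun a => ind (B i j :&: UU i j k) a * Ev i j s a).
  rewrite /c.
  have : s * \big[Rplus/0]_(k : I) Ex (fun a => ind (B i j :&: UU i j k) a * Ev i j s a) <=
     s * ((\big[Rplus/0]_(k : I) Pr p (B i j :&: UU i j k)) * Ex (Ev i j s)) by apply: Rmult_le_compat_l.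
  move=> h.
  have -> : Ex (Ev i j s) * (Pr p (B i j) - s * \big[Rplus/0]_(k : I) Pr p (B i j :&: UU i j k))
    = 1 * (Pr p (B i j) * Ex (Ev i j s)) - s * ((\big[Rplus/0]_(k : I) Pr p (B i j :&: UU i j k)) * Ex (Ev i j s)) by ring.
  lra.
have h0 : 0 <= Ex (fun a => ind (B i j) a * EE s a).
  apply: (Ex_ge0 hp) => a; apply: Rmult_le_pos; [exact: ind_ge0|exact: EE_ge0].
case: (Rle_lt_dec 0 c) => hc.
- have : Ex (EE s) * c <= Ex (Ev i j s) * c by apply: Rmult_le_compat_r.
  lra.
- have : Ex (EE s) * c <= 0 by rewrite -(Rmult_0_r (Ex (EE s))); apply: Rmult_le_compat_l => //; lra.
  lra.
Qed.


Lemma key s : 0 <= s ->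
  Ex (EE s) * (mu p B - gamma p B - s * Theta_bar p B) <= Ex (fun a => X a * EE s a).
Proof.
move=> s0.
set psi := Ex (EE s).
have eX : Ex (fun a => X a * EE s a) = \big[Rplus/0]_(i : I) Ex (fun a => ind (Bi B i) a * EE s a).
  rewrite -Ex_sum; apply: Ex_ext => a; rewrite X_sum Rmult_comm -sumR_distr; apply: eq_bigr => i _; ring.
rewrite eX.
set P := fun i j => Pr p (B i j).
set Q := fun i j => \big[Rplus/0]_(k : I) Pr p (B i j :&: UU i j k).
set Rr := fun i => \big[Rplus/0]_(j : J) \big[Rplus/0]_(k : J | k != j) Pr p (B i j :&: B i k).
have step : forall i, psi * (\big[Rplus/0]_(j : J) P i j) + ((- s * psi) * (\big[Rplus/0]_(j : J) Q i j)
   + (- psi) * (/ 2 * Rr i)) <= Ex (fun a => ind (Bi B i) a * EE s a).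
  move=> i; apply: Rle_trans (L_i i s0).
  have e1 : \big[Rplus/0]_(j : J) \big[Rplus/0]_(k : J | k != j) (Pr p (B i j :&: B i k) * psi) = psi * Rr i.
    rewrite /Rr -sumR_distr; apply: eq_bigr => j _; rewrite -sumR_distr; apply: eq_bigr => k _; ring.
  rewrite e1.
  have : psi * (\big[Rplus/0]_(j : J) P i j) + (- s * psi) * (\big[Rplus/0]_(j : J) Q i j) <=
      \big[Rplus/0]_(j : J) Ex (fun a => ind (B i j) a * EE s a).
    rewrite -sumR_lin; apply: sum_le => j _; apply: Rle_trans (L_ij i j s0); right.
    rewrite /P /Q /psi; ring.
  lra.
have hs := @sum_le I (index_enum I) (fun _ => true) _ _ (fun i _ => step i).
apply: Rle_trans hs.
rewrite sumR_split sumR_lin !sumR_distr.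
rewrite /mu /gamma /Theta_bar.
have -> : \big[Rplus/0]_(i : I) \big[Rplus/0]_(j : J) Q i j =
   \big[Rplus/0]_(i : I) \big[Rplus/0]_(j : J) \big[Rplus/0]_(k : I)
    Pr p (B i j :&: \bigcup_(l : J | rel_dep p B i j k l) B k l) by [].
rewrite /P (sumR_distr _ _ (/ 2)) /Rr; right; ring.
Qed.

Lemma Pr_ge0 E : 0 <= Pr p E.
Proof. rewrite Pr_Ex; apply: (Ex_ge0 hp) => a; exact: ind_ge0. Qed.

Lemma Theta_ge_mu : mu p B <= Theta_bar p B.
Proof.
apply: sum_le => i _; apply: sum_le => j _.
rewrite (bigD1 i) //=.
have -> : B i j :&: \bigcup_(l | rel_dep p B i j i l) B i l = B i j.
  apply/setIidPl; apply: (bigcup_sup j); by rewrite /rel_dep !eqxx.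
have : 0 <= \big[Rplus/0]_(k | k != i) Pr p (B i j :&: \bigcup_(l | rel_dep p B i j k l) B k l).
  by apply: sum_ge0 => k _; exact: Pr_ge0.
lra.
Qed.

Lemma Theta_le_Delta : Theta_bar p B <= Delta_bar p B.
Proof.
apply: sum_le => i _; apply: sum_le => j _; apply: sum_le => k _.
rewrite Pr_Ex.
have -> : \big[Rplus/0]_(l | rel_dep p B i j k l) Pr p (B i j :&: B k l) =
   \big[Rplus/0]_(l | rel_dep p B i j k l) Ex (ind (B i j :&: B k l)).
  by apply: eq_bigr => l _; rewrite Pr_Ex.
rewrite -Ex_sum; apply: (Ex_mono hp) => a.
rewrite {1}/ind; case: ifP => h; last by apply: sum_ge0 => l _; exact: ind_ge0.
move: h; rewrite inE => /andP [h1 /bigcupP [l hl h2]].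
rewrite (bigD1 l) //=.
have -> : ind (B i j :&: B k l) a = 1 by rewrite /ind inE h1 h2.
have : 0 <= \big[Rplus/0]_(i0 | rel_dep p B i j k i0 && (i0 != l)) ind (B i j :&: B k i0) a.
  by apply: sum_ge0 => l' _; exact: ind_ge0.
lra.
Qed.

Lemma tail_bound t s : 0 <= s ->
  Pr p (lower_tail p B t) <= exp (s * (mu p B - t)) * Ex (EE s).
Proof.
move=> s0; rewrite Pr_Ex.
have -> : exp (s * (mu p B - t)) * Ex (EE s) = exp (s * (mu p B - t)) * Ex (EE s) + 0 * Ex (EE s) by ring.
rewrite -Ex_lin; apply: (Ex_mono hp) => a.
rewrite Rmult_0_l Rplus_0_r /EE -exp_plus /ind /lower_tail inE.
case: Rle_dec => h /=.
- rewrite -exp_0; apply: exp_le.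
  have : s * X a <= s * (mu p B - t) by apply: Rmult_le_compat_l.
  lra.
- left; exact: exp_pos.
Qed.

Lemma psi_bound s : 0 <= s ->
  Ex (EE s) <= exp (- ((mu p B - gamma p B) * s) + Theta_bar p B * s ^ 2 / 2).
Proof.
move=> s0.
set psi' := fun s => \big[Rplus/0]_(A : {set G}) (weight p A * (- X A * exp (- s * X A))).
apply: (analytic (psi := fun s => Ex (EE s)) (psi' := psi')) => //.
- move=> u; exact: deriv_sum.
- rewrite -(Ex_const p 1); apply: Ex_ext => a; rewrite /EE Ropp_0 Rmult_0_l exp_0 //.
- move=> u u0.
  have e : psi' u = - Ex (fun a => X a * EE u a).
    have : Ex (fun a => X a * EE u a) + psi' u = 0.
      rewrite /Ex /psi' -sumR_split big1 // => A _; rewrite /EE; ring.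
    lra.
  rewrite e; have := key u0.
  have -> : mu p B - gamma p B - Theta_bar p B * u = mu p B - gamma p B - u * Theta_bar p B by ring.
  lra.
Qed.
End Main.

Theorem mainTheorem4 (G I J : finType) (p : G -> R) (B : I -> J -> event G)
  (hp : forall x : G, 0 <= p x <= 1)
  (hinc : forall (i : I) (j : J), increasing_event (B i j))
  (hmu : 0 < mu p B) (t : R)
  (ht : gamma p B <= t <= mu p B) :
  Pr p (lower_tail p B t) <= exp (- ((t - gamma p B) ^ 2 / (2 * Theta_bar p B))) /\
  exp (- ((t - gamma p B) ^ 2 / (2 * Theta_bar p B)))
    <= exp (- ((t - gamma p B) ^ 2 / (2 * Delta_bar p B))).
Proof.
have hT : mu p B <= Theta_bar p B by apply: Theta_ge_mu.
have hD : Theta_bar p B <= Delta_bar p B by apply: Theta_le_Delta.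
set Th := Theta_bar p B in hT hD *.
set Dl := Delta_bar p B in hD *.
set g := gamma p B in ht *.
set m := mu p B in hmu hT ht *.
have Tpos : 0 < Th by lra.
split.
- set s := (t - g) / Th.
  have s0 : 0 <= s by rewrite /s; apply: Rmult_le_pos; [lra| left; apply: Rinv_0_lt_compat].
  have htail : Pr p (lower_tail p B t) <= exp (s * (m - t)) * Ex p (EE B s) by apply: tail_bound.
  have hpsi : Ex p (EE B s) <= exp (- ((m - g) * s) + Th * s ^ 2 / 2) by apply: psi_bound.
  apply: Rle_trans htail _.
  apply: Rle_trans (_ : _ <= exp (s * (m - t)) * exp (- ((m - g) * s) + Th * s ^ 2 / 2)) _.
    apply: Rmult_le_compat_l => //; left; exact: exp_pos.
  rewrite -exp_plus; right; congr exp; rewrite /s; field; lra.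
- apply: exp_le; apply: Ropp_le_contravar; rewrite /Rdiv.
  apply: Rmult_le_compat_l; first exact: pow2_ge_0.
  apply: Rinv_le_contravar; lra.
Qed.
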